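(* Let $r\geq 3$, $k\geq 4$, and let $D$ be an $m$-colored semicomplete $r$-partite digraph. Then $D$ has a $k$-colored kernel.
   Context: A semicomplete $r$-partite digraph ($r\ge 2$) is a digraph whose vertex set is partitioned into $r$ nonempty independent sets (partite sets) such that for any two vertices $u,v$ in different partite sets at least one of the arcs $(u,v)$, $(v,u)$ is present (both may be present); there are no arcs inside a partite set. An $m$-colored digraph is a digraph whose arcs are each assigned one of $m$ colors. A directed path (no repeated vertices) is $j$-colored if its arcs use exactly $j$ distinct colors. A $k$-colored kernel of $D$ is a nonempty set $K\subseteq V(D)$ such that (a) for every $u\in V(D)\setminus K$ there exist $v\in K$ and a $j$-colored directed path from $u$ to $v$ with $1\le j\le k$, and (b) for all distinct $u,v\in K$ there is no $j$-colored directed path from $u$ to $v$ with $1\le j\le k$. *)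

(* Defs.v *)
From mathcomp Require Import all_boot.
Set Implicit Arguments. Unset Strict Implicit. Unset Printing Implicit Defensive.

Definition semicomplete_multipartite (V : finType) (r : nat) (E : rel V) : Prop :=
  exists part : V -> 'I_r,
    [/\ (forall i : 'I_r, exists v : V, part v = i),
        (forall u v : V, part u = part v -> ~~ E u v) &
        (forall u v : V, part u != part v -> E u v || E v u)].

Definition path_colors (V : finType) (m : nat) (col : V -> V -> 'I_m)
  (u : V) (p : seq V) : seq 'I_m :=
  [seq col xy.1 xy.2 | xy <- zip (u :: p) p].

Definition kcol_path (V : finType) (m : nat) (E : rel V) (col : V -> V -> 'I_m)
  (k : nat) (u v : V) : Prop :=
  exists p : seq V,
    [/\ path E u p, uniq (u :: p), last u p = v &
        let j := size (undup (path_colors col u p)) in (1 <= j) && (j <= k)].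

Definition kcolored_kernel (V : finType) (m : nat) (E : rel V) (col : V -> V -> 'I_m)
  (k : nat) (K : {set V}) : Prop :=
  [/\ K != set0,
      (forall u, u \notin K -> exists2 v, v \in K & kcol_path E col k u v) &
      (forall u v, u \in K -> v \in K -> u != v -> ~ kcol_path E col k u v)].

(* Main.v *)
Require Import Defs.
From mathcomp Require Import all_boot.

Lemma walk_kcol (V : finType) (m : nat) (E : rel V) (col : V -> V -> 'I_m)
  (k : nat) (u v : V) (p : seq V) :
  path E u p -> last u p = v -> u != v -> size p <= k -> kcol_path E col k u v.
Proof.
move=> pp <- neq sz; move: neq.
case: (shortenP pp) => p' pp' up' sub neq.
exists p'; split => //.
have szp : size p' <= size p.
  by apply: uniq_leq_size => //; case/andP: up'.
have sc : size (path_colors col u p') = size p'.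
  by rewrite /path_colors size_map size_zip /=; apply/minn_idPr; exact: leqnSn.
apply/andP; split.
  have p0 : 0 < size p'.
    by case: p' {pp' up' sub szp sc} neq => //=; rewrite eqxx.
  rewrite lt0n size_eq0; apply/eqP => /undup_nil /(congr1 size).
  by rewrite sc /=; move: p0; case: (size p').
by rewrite (leq_trans (size_undup _)) // sc (leq_trans szp).
Qed.

Theorem mainTheorem6 (V : finType) (r m k : nat) (E : rel V) (col : V -> V -> 'I_m) :
  3 <= r -> 4 <= k -> semicomplete_multipartite r E ->
  exists K : {set V}, kcolored_kernel E col k K.
Proof.
move=> r3 k4 [part [surj indep adj]].
have r0 : 0 < r by apply: leq_trans r3.
have [v0 _] := surj (Ordinal r0).
have k1 : 1 <= k by apply: leq_trans k4.
have k2 : 2 <= k by apply: leq_trans k4.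
have k3 : 3 <= k by apply: leq_trans k4.
have diffE : forall a b, E a b -> part a != part b.
  move=> a b Eab; apply/eqP => h; by move: (indep _ _ h); rewrite Eab.
case: (boolP [exists s, [forall w, ~~ E s w]]) => [/existsP [s /forallP hs] | nosink].
  exists [set s | [forall w, ~~ E s w]]; split.
  - by apply/set0Pn; exists s; rewrite inE; apply/forallP.
  - move=> u; rewrite inE negb_forall => /existsP [w]; rewrite negbK => Euw.
    exists s; first by rewrite inE; apply/forallP.
    have us : u != s by apply/eqP => eus; move: (hs w); rewrite -eus Euw.
    case: (eqVneq (part u) (part s)) => pus.
      have pws : part w != part s by rewrite -pus eq_sym diffE.
      have Ews : E w s by move: (adj _ _ pws); rewrite (negbTE (hs w)) orbF.
      by apply: (@walk_kcol _ _ _ _ _ _ _ [:: w; s]) => //=; rewrite Euw Ews.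
    have Eus : E u s by move: (adj _ _ pus); rewrite (negbTE (hs u)) orbF.
    by apply: (@walk_kcol _ _ _ _ _ _ _ [:: s]) => //=; rewrite Eus.
  - move=> u w; rewrite inE => /forallP hu _ _ [[|a p] [pp _ _ j]].
      by move: j.
    by move: pp => /= /andP [Eua _]; move: (hu a); rewrite Eua.
have ns : forall u, exists w, E u w.
  move=> u; move: nosink; rewrite negb_exists => /forallP /(_ u).
  by rewrite negb_forall => /existsP [w]; rewrite negbK; exists w.
pose in2 y x := [|| y == x, E y x | [exists z, E y z && E z x]].
pose B x := [set y | in2 y x].
case: (@arg_maxnP V v0 xpredT (fun x => #|B x|) erefl) => v _ vmax.
have near3 : forall u, part u != part v -> exists z, E u z && in2 z v.
  move=> u puv; case: (boolP [exists z, E u z && in2 z v]) => [/existsP //|/existsPn H].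
  have uB : u \notin B v.
    rewrite inE; apply/negP => /orP [/eqP euv|/orP [Euv|/existsP [z /andP [Euz Ezv]]]].
    - by move: puv; rewrite euv eqxx.
    - by move: (H v); rewrite Euv /in2 eqxx.
    - by move: (H z); rewrite Euz /in2 Ezv orbT.
  have sub : u |: B v \subset B u.
    apply/subsetP => w; rewrite !inE => /orP [/eqP ->|]; first by rewrite /in2 eqxx.
    move=> wv.
    case: (eqVneq (part w) (part u)) => pwu.
      have [p /andP [Ewp pv]] : exists p, E w p && ((p == v) || E p v).
        move: wv => /orP [/eqP ewv|/orP [Ewv|/existsP [z /andP [Ewz Ezv]]]].
        - by move: puv; rewrite -ewv pwu eqxx.
        - by exists v; rewrite Ewv eqxx.
        - by exists z; rewrite Ewz Ezv orbT.
      have ppu : part p != part u by rewrite -pwu eq_sym diffE.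
      case/orP: (adj _ _ ppu) => [Epu|Eup].
        by rewrite /in2; apply/orP; right; apply/orP; right; apply/existsP; exists p; rewrite Ewp Epu.
      move: (H p); rewrite Eup /= /in2; case/orP: pv => [->|->]; by rewrite ?orbT.
    case/orP: (adj _ _ pwu) => [Ewu|Euw].
      by rewrite /in2 Ewu orbT.
    by move: (H w); rewrite Euw wv.
  move: (subset_leq_card sub) (vmax u erefl); rewrite cardsU1 uB /=.
  by move=> h1 h2; move: (leq_trans h1 h2); rewrite ltnn.
exists [set v]; split.
- by apply/set0Pn; exists v; rewrite set11.
- move=> u; rewrite in_set1 => uv; exists v; first by rewrite set11.
  have walk3 : forall z, E u z -> in2 z v -> kcol_path E col k u v.
    move=> z Euz /orP [/eqP ezv|/orP [Ezv|/existsP [z' /andP [Ezz Ez'v]]]].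
    - by apply: (@walk_kcol _ _ _ _ _ _ _ [:: v]) => //=; rewrite andbT -ezv.
    - by apply: (@walk_kcol _ _ _ _ _ _ _ [:: z; v]) => //=; rewrite Euz Ezv.
    - by apply: (@walk_kcol _ _ _ _ _ _ _ [:: z; z'; v]) => //=; rewrite Euz Ezz Ez'v.
  case: (eqVneq (part u) (part v)) => puv.
    have [w Euw] := ns u.
    have pwv : part w != part v by rewrite -puv eq_sym diffE.
    have [z /andP [Ewz] zv] := near3 w pwv.
    move: zv => /orP [/eqP ezv|/orP [Ezv|/existsP [z' /andP [Ezz Ez'v]]]].
    - by apply: (@walk_kcol _ _ _ _ _ _ _ [:: w; v]) => //=; rewrite Euw -ezv Ewz.
    - by apply: (@walk_kcol _ _ _ _ _ _ _ [:: w; z; v]) => //=; rewrite Euw Ewz Ezv.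
    - by apply: (@walk_kcol _ _ _ _ _ _ _ [:: w; z; z'; v]) => //=; rewrite Euw Ewz Ezz Ez'v.
  have [z /andP [Euz zv]] := near3 u puv.
  exact: walk3 Euz zv.
- by move=> u w; rewrite !in_set1 => /eqP -> /eqP ->; rewrite eqxx.
Qed.
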